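(* Let $\Omega$ be a finite set, $(H_i\mid i\in\Omega)$ finite abelian groups, $h_i=|H_i|$, $\mathbf{H}=\prod_{i\in\Omega}H_i$, $\mathbf{P}=(\Omega,\preccurlyeq_{\mathbf{P}})$ a poset. Let $\alpha\in\hat{\mathbf{H}}$ with $\langle\mathrm{supp}(\alpha)\rangle_{\overline{\mathbf{P}}}=D$, and let $I\in\mathcal{I}(\mathbf{P})$. Then $$\sum_{\beta\in\mathbf{H},\ \langle\mathrm{supp}(\beta)\rangle_{\mathbf{P}}=I}\alpha(\beta)=\begin{cases}(-1)^{|I\cap D|}\Big(\prod_{i\in I-\max_{\mathbf{P}}(I)}h_i\Big)\Big(\prod_{i\in\max_{\mathbf{P}}(I)-D}(h_i-1)\Big),& I\cap D\subseteq\max_{\mathbf{P}}(I);\\ 0,& I\cap D\not\subseteq\max_{\mathbf{P}}(I).\end{cases}$$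
   Context: $\hat{\mathbf{H}}$ is the character group of $\mathbf{H}$, identified with $\prod_i\hat{H_i}$ via $\alpha(\beta)=\prod_i\alpha_{(i)}(\beta_{(i)})$; $\mathrm{supp}$ of a codeword is the set of coordinates where it is not the identity. $\mathcal{I}(\mathbf{P})$ is the set of ideals (down-closed subsets) of $\mathbf{P}$; $\max_{\mathbf{P}}(I)$ is the set of maximal elements of $I$. For a poset $\mathbf{Q}$ on $\Omega$, $\langle B\rangle_{\mathbf{Q}}=\{a:\exists b\in B, a\preccurlyeq_{\mathbf{Q}}b\}$. $\overline{\mathbf{P}}$ is the dual poset ($u\preccurlyeq_{\overline{\mathbf{P}}}v\iff v\preccurlyeq_{\mathbf{P}}u$). *)

(* Defs.v *)
From HB Require Import structures.
From mathcomp Require Import all_boot all_order all_algebra all_field.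
Set Implicit Arguments. Unset Strict Implicit. Unset Printing Implicit Defensive.
Import Order.TTheory GRing.Theory Num.Theory.
Local Open Scope ring_scope.
Local Open Scope order_scope.

Definition down_gen d (Omega : finPOrderType d) (B : {set Omega}) : {set Omega} :=
  [set a | [exists b in B, (a <= b)%O]].

(* <B>_{dual P} : downward closure in the dual poset = upward closure in P *)
Definition up_gen d (Omega : finPOrderType d) (B : {set Omega}) : {set Omega} :=
  [set a | [exists b in B, (b <= a)%O]].

Definition is_ideal d (Omega : finPOrderType d) (I : {set Omega}) : bool :=
  [forall a, forall b, (b \in I) && (a <= b)%O ==> (a \in I)].

Definition maxP d (Omega : finPOrderType d) (I : {set Omega}) : {set Omega} :=
  [set i in I | [forall j in I, (i <= j)%O ==> (j == i)]].

Definition is_character (G : finZmodType) (chi : G -> algC) : Prop :=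
  chi 0%R = 1%R /\ forall x y : G, chi (x + y)%R = (chi x * chi y)%R.

Definition supp_word d (Omega : finPOrderType d) (H : Omega -> finZmodType)
  (beta : {dffun forall i, H i}) : {set Omega} :=
  [set i | beta i != 0%R].

Definition supp_char d (Omega : finPOrderType d) (H : Omega -> finZmodType)
  (alpha : forall i, H i -> algC) : {set Omega} :=
  [set i | ~~ [forall x : H i, alpha i x == 1%R]].

Definition char_eval d (Omega : finPOrderType d) (H : Omega -> finZmodType)
  (alpha : forall i, H i -> algC) (beta : {dffun forall i, H i}) : algC :=
  (\prod_(i : Omega) alpha i (beta i))%R.

(* Main.v *)
Require Import Defs.
From HB Require Import structures.
From mathcomp Require Import all_boot all_order all_algebra all_field.
From mathcomp Require Import ring.
Import Order.TTheory GRing.Theory Num.Theory.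
Local Open Scope ring_scope.

Lemma dsum_prod (R : comNzRingType) (I : finType) (T_ : I -> finType)
  (F : forall i, T_ i -> R) :
  \sum_(b : {dffun forall i, T_ i}) \prod_i F i (b i) =
  \prod_i \sum_(x : T_ i) F i x.
Proof.
pose P_ := fun i => [ffun x : T_ i => F i x].
transitivity (\prod_i \sum_(x : T_ i) P_ i x); last first.
  by apply: eq_bigr => i _; apply: eq_bigr => x _; rewrite ffunE.
under eq_bigr do rewrite (big_tag (fun i => P_ i)).
rewrite bigA_distr_big_dep.
rewrite -(big_fprod _ _ P_).
rewrite (reindex (@dffun_of_fprod I T_)); last exact/onW_bij/dffun_of_fprod_bij.
by apply: eq_bigr => t _; apply: eq_bigr => i _; rewrite !ffunE.
Qed.

Lemma prod_if (R : comNzRingType) (I : finType) (b : I -> bool) (a : I -> R) :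
  \prod_i (if b i then a i else 0) = if [forall i, b i] then \prod_i a i else 0.
Proof.
case: forallP => [Hb|/forallP/forallPn[i /negbTE Hi]].
  by apply: eq_bigr => i _; rewrite Hb.
by rewrite (bigD1 i) //= Hi mul0r.
Qed.

Lemma char_sum (G : finZmodType) (chi : G -> algC) : is_character chi ->
  \sum_(x : G) chi x = if [forall x, chi x == 1] then (#|G|%:R) else 0.
Proof.
move=> [H0 HM]; case: forallP => [Ht|/forallP/forallPn[y Hy]].
  by rewrite (eq_bigr (fun _ => 1)) ?sumr_const // => x _; rewrite (eqP (Ht x)).
have E : \sum_(x : G) chi x = chi y * \sum_(x : G) chi x.
  rewrite mulr_sumr (reindex_inj (addrI y)) /=.
  by apply: eq_bigr => x _; rewrite HM.
apply/eqP; move: E => /eqP; rewrite -subr_eq0 -{1}(mul1r (\sum_x chi x)) -mulrBl.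
by rewrite mulf_eq0 subr_eq0 eq_sym (negbTE Hy).
Qed.

Section Poset.
Variables (d : Order.disp_t) (Omega : finPOrderType d).

Lemma max_above (I : {set Omega}) a : a \in I ->
  exists2 m, m \in maxP I & (a <= m)%O.
Proof.
move=> aI.
have P0 : (a \in I) && (a <= a)%O by rewrite aI lexx.
case: (@arg_maxnP Omega a [pred m | (m \in I) && (a <= m)%O] (fun m => #|[set k | (k <= m)%O]|) P0) => m /andP[mI am] Hm.
exists m => //; rewrite inE mI /=; apply/forall_inP => j jI; apply/implyP => mj.
apply/negPn/negP => jm.
have : (#|[set k | (k <= j)%O]| <= #|[set k | (k <= m)%O]|)%N.
  by apply: Hm; rewrite inE /= jI (le_trans am mj).
apply/negP; rewrite -ltnNge; apply: proper_card; apply/properP; split.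
  by apply/subsetP => k; rewrite !inE => km; apply: le_trans km mj.
exists j; rewrite !inE ?lexx //; apply/negP => jm'.
by move/negP: jm; apply; apply/eqP; apply: le_anti; rewrite jm' mj.
Qed.

Lemma maxP_sub (I : {set Omega}) : maxP I \subset I.
Proof. by apply/subsetP => i; rewrite inE => /andP[]. Qed.

Lemma down_gen_eq (I : {set Omega}) (S : {set Omega}) : is_ideal I ->
  (down_gen S == I) = (S \subset I) && (maxP I \subset S).
Proof.
move=> /forallP HI.
have HI' a b : b \in I -> (a <= b)%O -> a \in I.
  by move=> bI ab; move/forallP: (HI a) => /(_ b); rewrite bI ab /= => ->.
apply/eqP/andP => [<-|[SI MS]].
  split; apply/subsetP => x.
    by move=> xS; rewrite inE; apply/existsP; exists x; rewrite xS lexx.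
  rewrite inE => /andP[xI /forall_inP Hx].
  move: (xI); rewrite inE => /existsP[b /andP[bS xb]].
  have bI : b \in down_gen S by rewrite inE; apply/existsP; exists b; rewrite bS lexx.
  by have /implyP/(_ xb)/eqP <- := Hx b bI.
apply/setP => a; rewrite inE; apply/existsP/idP => [[b /andP[bS ab]]|aI].
  by apply: HI' ab; apply: (subsetP SI).
have [m mM am] := @max_above I a aI.
by exists m; rewrite am (subsetP MS) .
Qed.

End Poset.

Theorem proposition2p1 (d : Order.disp_t) (Omega : finPOrderType d)
  (H : Omega -> finZmodType) (alpha : forall i, H i -> algC)
  (Halpha : forall i, is_character (alpha i))
  (D : {set Omega}) (HD : up_gen (supp_char alpha) = D)
  (I : {set Omega}) (HI : is_ideal I) :
  \sum_(beta : {dffun forall i, H i} | down_gen (supp_word beta) == I)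
      char_eval alpha beta =
  if I :&: D \subset maxP I then
    (-1) ^+ #|I :&: D| *
    (\prod_(i in I :\: maxP I) (#|H i|%:R : algC)) *
    (\prod_(i in maxP I :\: D) ((#|H i|%:R : algC) - 1))
  else 0.
Proof.
pose c i (x : H i) := if i \in I then (if i \in maxP I then x != 0 else true)
                      else x == 0.
pose t i := [forall x, alpha i x == 1].
pose f i : algC := if i \in I then
     (if i \in maxP I then (if t i then #|H i|%:R - 1 else -1)
      else (if t i then #|H i|%:R else 0)) else 1.
have HI' a b : b \in I -> (a <= b)%O -> a \in I.
  move=> bI ab; move/forallP: HI => /(_ a) /forallP /(_ b).
  by rewrite bI ab.
have MI := @maxP_sub _ _ I.
have step1 : \sum_(beta : {dffun forall i, H i} | down_gen (supp_word beta) == I)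
      char_eval alpha beta =
    \sum_(beta : {dffun forall i, H i}) \prod_i
      (if c i (beta i) then alpha i (beta i) else 0).
  rewrite big_mkcond; apply: eq_bigr => beta _.
  rewrite prod_if down_gen_eq //.
  have -> : (supp_word beta \subset I) && (maxP I \subset supp_word beta) =
            [forall i, c i (beta i)].
    apply/andP/forallP => [[SI MS] i|Hc].
      rewrite /c; case iI: (i \in I).
        case iM: (i \in maxP I) => //.
        by have := subsetP MS i iM; rewrite inE.
      by apply/negPn/negP => bi; move: (subsetP SI i); rewrite inE iI => /(_ bi).
    split; apply/subsetP => x.
      rewrite inE => bx; have := Hc x; rewrite /c.
      by case: (x \in I) => //; rewrite (negbTE bx).
    move=> xM; have := Hc x; rewrite /c (subsetP MI x xM) xM inE //.
  by [].
have step2 : forall i, \sum_(x : H i) (if c i x then alpha i x else 0) = f i.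
  move=> i; have [H0 _] := Halpha i.
  rewrite /c /f; case iI: (i \in I); last first.
    by rewrite -big_mkcond big_pred1_eq H0.
  case iM: (i \in maxP I).
    rewrite -big_mkcond /=.
    have -> : \sum_(x | x != 0) alpha i x = \sum_x alpha i x - 1.
      by rewrite [X in _ = X - _](bigD1 0) //= H0 addrC addrK.
    by rewrite (@char_sum _ _ (Halpha i)) -/(t i); case: (t i) => //; rewrite sub0r.
  by rewrite (eq_bigr (fun x => alpha i x)) // (@char_sum _ _ (Halpha i)).
rewrite step1 (@dsum_prod _ _ _ (fun i x => if c i x then alpha i x else 0)) (eq_bigr f) //.
have supp_t i : (i \in supp_char alpha) = ~~ t i by rewrite inE.
have tD i : i \notin D -> t i.
  move=> iD; apply/negPn; rewrite -supp_t; apply/negP => iS; move/negP: iD; apply.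
  by rewrite -HD inE; apply/existsP; exists i; rewrite iS lexx.
rewrite (bigID (mem I)) /= [X in _ * X]big1 ?mulr1; last first.
  by move=> i /negbTE iI; rewrite /f iI.
case: ifP => [sub|/negbT nsub].
  have tIM i : i \in I :\: maxP I -> t i.
    rewrite in_setD => /andP[iM iI]; apply: tD; apply/negP => iD.
    by move/negP: iM; apply; apply: (subsetP sub); rewrite in_setI iI.
  have tM i : i \in maxP I -> t i = (i \notin D).
    move=> iM; apply/idP/idP; last exact: tD.
    move=> ti; apply/negP; rewrite -HD inE => /existsP[j /andP[jS ji]].
    have iI := subsetP MI i iM.
    have jI := HI' _ _ iI ji.
    have jM : j \in maxP I.
      by apply: (subsetP sub); rewrite in_setI jI -HD inE; apply/existsP; exists j; rewrite jS lexx.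
    move: jM; rewrite inE => /andP[_ /forall_inP /(_ i iI) /implyP /(_ ji) /eqP ij].
    by move: jS; rewrite -ij supp_t ti.
  have -> : \prod_(i | i \in I) f i = \prod_(i in I) f i by [].
  rewrite (big_setID (maxP I)) /= (setIidPr MI).
  rewrite (big_setID D) /=.
  have -> : maxP I :&: D = I :&: D.
    apply/setP => i; rewrite !in_setI; apply/andP/andP => [[iM iD]|[iI iD]].
      by rewrite (subsetP MI i iM).
    by split=> //; apply: (subsetP sub); rewrite in_setI iI.
  rewrite (eq_bigr (fun _ => -1)); last first.
    move=> i; rewrite in_setI => /andP[iI iD].
    have iM : i \in maxP I by apply: (subsetP sub); rewrite in_setI iI iD.
    by rewrite /f iI iM tM // iD.
  rewrite prodr_const.
  rewrite [X in _ * X * _](eq_bigr (fun i => #|H i|%:R - 1)); last first.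
    move=> i; rewrite in_setD => /andP[iD iM].
    by rewrite /f (subsetP MI i iM) iM tM // iD.
  rewrite [X in _ * X](eq_bigr (fun i => #|H i|%:R)); last first.
    move=> i iIM; have := tIM i iIM; move: iIM; rewrite in_setD => /andP[/negbTE iM iI].
    by rewrite /f iI iM => ->.
  ring.
have [i] : exists i, i \in (I :&: D) :\: maxP I.
  by apply/set0Pn; rewrite setD_eq0.
rewrite in_setD in_setI => /andP[iM /andP[iI iD]].
move: iD; rewrite -HD inE => /existsP[j /andP[jS ji]].
have jI := HI' _ _ iI ji.
have jM : j \notin maxP I.
  apply/negP => jM'; move: (jM'); rewrite inE => /andP[_ /forall_inP /(_ i iI) /implyP /(_ ji) /eqP ij].
  by move/negP: iM; apply; rewrite ij.
rewrite (bigD1 j) //= /f jI (negbTE jM).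
by move: jS; rewrite supp_t => /negbTE ->; rewrite mul0r.
Qed.
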